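(* Let $f:\mathbb R^n\to\mathbb R$ be differentiable with $L$-Lipschitz gradient (w.r.t. $\|\cdot\|_2$). Let $\{x_t\}_{t\ge0}$, $\{L_t\}_{t\ge0}$ be generated by the AC-FW algorithm described in the context, where the damping sequence satisfies Condition (D), let $\eta>1$, and assume $L_0>0$. Then the complement $\mathbb Z_+\setminus\mathcal I_\eta$ is finite (hence $\mathcal I_\eta$ is infinite). Moreover, if $\{k_t\}_{t\ge0}$ denotes the elements of $\mathcal I_\eta$ in increasing order, then for every $t\ge 0$, $$t\le k_t\le t+\left\lfloor \log_\eta\!\left(\frac{L}{rL_0}\right)\right\rfloor .$$
   Context: Let $\mathcal A\subset\mathbb R^n$ be a compact set (the dictionary) and let the feasible set be $\mathcal X=\mathrm{conv}(\mathcal A)$ or $\mathcal X=\mathrm{lin}(\mathcal A)$. For $x\neq y$ let $\ell(x,y):=2|f(y)-f(x)-\nabla f(x)^\top(y-x)|/\|y-x\|_2^2$, and $\ell(x,x):=0$. AC-FW algorithm: given a damping sequence $\{r_t\}_{t\ge0}$ and a direction-finding subroutine, pick $x_{-1}\in\mathcal A$, $x_0\in\arg\min_{v\in\mathcal A}\nabla f(x_{-1})^\top v$, $L_0:=\ell(x_{-1},x_0)$. For $t=0,1,2,\dots$: choose $v_t\in\arg\min_{v\in\mathcal A}\nabla f(x_t)^\top v$; the subroutine returns $d_t\in\mathbb R^n$ and $\gamma_t^{\max}\in(0,\infty]$; set $\gamma_t:=\min\{\nabla f(x_t)^\top d_t/(L_t\|d_t\|_2^2),\gamma_t^{\max}\}$,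 $\bar x_{t+1}:=x_t-\gamma_t d_t$, $L_{t+1}:=\max\{\ell(x_t,\bar x_{t+1}),r_tL_t\}$, and $x_{t+1}:=\bar x_{t+1}$ if $f(\bar x_{t+1})<f(x_t)$, else $x_{t+1}:=x_t$. $\mathbb Z_+$ is the set of nonnegative integers. For $\eta>1$, $\mathcal I_\eta:=\{t\ge0: L_{t+1}\le \eta L_t\}$. Condition (D): $r_t\in(0,1]$ for all $t\ge0$ and $r:=\prod_{t\ge0}r_t\in(0,1]$. *)

(* Defs.v *)
From HB Require Import structures.
From mathcomp Require Import all_boot all_order all_algebra.
From mathcomp Require Import all_classical all_reals all_analysis.
Set Implicit Arguments. Unset Strict Implicit. Unset Printing Implicit Defensive.
Import Order.TTheory GRing.Theory Num.Theory.
Import numFieldNormedType.Exports.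
Local Open Scope classical_set_scope.
Local Open Scope ring_scope.

Section Defs.
Variables (R : realType) (n : nat).
Implicit Types (u v x y : 'rV[R]_n).

Definition dot u v : R := \sum_(i < n) u 0 i * v 0 i.
Definition norm2 u : R := Num.sqrt (dot u u).

Definition grad (f : 'rV[R]_n -> R) x : 'rV[R]_n :=
  \row_(i < n) ('d f x (delta_mx 0 i : 'rV[R]_n)).

Definition ell (f : 'rV[R]_n -> R) x y : R :=
  if x == y then 0
  else 2 * `|f y - f x - dot (grad f x) (y - x)| / (norm2 (y - x)) ^+ 2.

Definition lin_argmin (A : set 'rV[R]_n) (g : 'rV[R]_n) v : Prop :=
  A v /\ forall w, A w -> dot g v <= dot g w.

(* The sequences (x_t), (L_t) are generated by AC-FW with damping sequence
   r, dictionary A, starting point xm1 = x_{-1}, LMO outputs v_t, and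
   direction-finding subroutine outputs d_t, gmax_t in (0, +oo]; gamma_t and
   xbar_{t+1} are the step size and trial point. *)
Definition acfw_run (f : 'rV[R]_n -> R) (A : set 'rV[R]_n) (r : nat -> R)
  (xm1 : 'rV[R]_n) (x : nat -> 'rV[R]_n) (L : nat -> R)
  (v : nat -> 'rV[R]_n) (d : nat -> 'rV[R]_n) (gmax : nat -> \bar R)
  (gamma : nat -> R) (xbar : nat -> 'rV[R]_n) : Prop :=
  [/\ A xm1,
      lin_argmin A (grad f xm1) (x 0%N),
      L 0%N = ell f xm1 (x 0%N)
    & forall t : nat,
      [/\ lin_argmin A (grad f (x t)) (v t) /\ (0 < gmax t)%E,
          (gamma t)%:E =
            Order.min ((dot (grad f (x t)) (d t) / (L t * (norm2 (d t)) ^+ 2))%:E)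
                      (gmax t),
          xbar t.+1 = x t - gamma t *: d t,
          L t.+1 = Num.max (ell f (x t) (xbar t.+1)) (r t * L t)
        & x t.+1 = if f (xbar t.+1) < f (x t) then xbar t.+1 else x t]].

Definition condD (r : nat -> R) (rr : R) : Prop :=
  [/\ forall t, 0 < r t <= 1,
      0 < rr <= 1
    & (fun N : nat => \prod_(t < N) r t) @ \oo --> rr].

Definition I_eta (L : nat -> R) (eta : R) : set nat :=
  [set t | L t.+1 <= eta * L t].

End Defs.

(* Main.v *)
Require Import Defs.
From HB Require Import structures.
From mathcomp Require Import all_boot all_order all_algebra.
From mathcomp Require Import all_classical all_reals all_analysis.
From mathcomp Require Import ring lra zify.
Import Order.TTheory GRing.Theory Num.Theory.
Import numFieldNormedType.Exports.
Local Open Scope classical_set_scope.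
Local Open Scope ring_scope.

Lemma arith_aux (R : realFieldType) (a b d1 d2 k c1 fx fy : R) :
  fy - c1 - k/2 - fx = d1 - c1 + - a ->
  fy - c1 + k/2 - fx = d2 - c1 + b ->
  d1 - c1 <= a -> - b <= d2 - c1 ->
  `|fy - fx - c1| <= k/2.
Proof. move=> *; rewrite ler_norml; apply/andP; split; lra. Qed.

Section S.
Variables (R : realType) (n : nat).
Implicit Types (u v w : 'rV[R]_n).

Lemma dotBl u w v : dot (u - w) v = dot u v - dot w v.
Proof. by rewrite /dot -sumrB; apply: eq_bigr => i _; rewrite !mxE mulrBl. Qed.
Lemma dotBr u w v : dot v (u - w) = dot v u - dot v w.
Proof. by rewrite /dot -sumrB; apply: eq_bigr => i _; rewrite !mxE mulrBr. Qed.
Lemma dotZl (a : R) u v : dot (a *: u) v = a * dot u v.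
Proof. by rewrite /dot mulr_sumr; apply: eq_bigr => i _; rewrite !mxE mulrA. Qed.
Lemma dotZr (a : R) u v : dot v (a *: u) = a * dot v u.
Proof. by rewrite /dot mulr_sumr; apply: eq_bigr => i _; rewrite !mxE mulrCA. Qed.
Lemma dotC u v : dot u v = dot v u.
Proof. by rewrite /dot; apply: eq_bigr => i _; rewrite mulrC. Qed.
Lemma dot_ge0 u : 0 <= dot u u.
Proof. by rewrite /dot; apply: sumr_ge0 => i _; rewrite -expr2 sqr_ge0. Qed.
Lemma norm2_sq u : norm2 u ^+ 2 = dot u u.
Proof. by rewrite /norm2 sqr_sqrtr // dot_ge0. Qed.
Lemma norm2_ge0 u : 0 <= norm2 u.
Proof. exact: sqrtr_ge0. Qed.
Lemma norm2Z (a : R) u : norm2 (a *: u) = `|a| * norm2 u.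
Proof.
by rewrite /norm2 dotZl dotZr mulrA -expr2 sqrtrM ?sqr_ge0 // sqrtr_sqr.
Qed.

Lemma dot0 u : dot u u = 0 -> forall v, dot u v = 0.
Proof.
move=> H v; have H2 : forall i, u 0 i = 0.
  move=> i; move: H; rewrite /dot => /eqP; rewrite psumr_eq0; last first.
    by move=> j _; rewrite -expr2 sqr_ge0.
  by move/allP => /(_ i (mem_index_enum _)) /=; rewrite mulf_eq0 orbb => /eqP.
by rewrite /dot big1 // => i _; rewrite H2 mul0r.
Qed.

Lemma CS_sq u v : dot u v ^+ 2 <= dot u u * dot v v.
Proof.
have [B0|Bp] := eqVneq (dot v v) 0.
  by rewrite dotC (dot0 _ B0) B0 expr0n /= mulr0.
have Bgt : 0 < dot v v by rewrite lt_def Bp dot_ge0.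
have := dot_ge0 (dot v v *: u - dot u v *: v).
rewrite !(dotBl, dotBr, dotZl, dotZr) [dot v u]dotC => H.
rewrite -subr_ge0; rewrite -(pmulr_rge0 _ Bgt).
by move: H; congr (_ <= _); ring.
Qed.

Lemma CS u v : `|dot u v| <= norm2 u * norm2 v.
Proof.
rewrite /norm2 -sqrtrM ?dot_ge0 // -sqrtr_sqr.
by rewrite ler_sqrt ?CS_sq // mulr_ge0 ?dot_ge0.
Qed.


Lemma dgrad (f : 'rV[R]_n -> R) a h : differentiable f a ->
  'd f a h = dot (grad f a) h.
Proof.
move=> _; rewrite {1}(row_sum_delta h) linear_sum /dot.
by apply: eq_bigr => i _; rewrite linearZ /= !mxE mulrC.
Qed.

Lemma line_derive (f : 'rV[R]_n -> R) (x h : 'rV[R]_n) (s : R) :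
  (forall y, differentiable f y) ->
  is_derive s 1 (fun s => f (s *: h + x)) ('d f (s *: h + x) h).
Proof.
move=> df; set a := s *: h + x.
have E : forall F : R -> R, (forall t, F t = t^-1 *: ((f \o shift a) (t *: h) - f a)) ->
   F = (fun t => t^-1 *: ((f \o shift a) (t *: h) - f a)).
  by move=> F HF; apply/funext => t; rewrite HF.
split.
  rewrite /derivable; set F := (fun t => _); rewrite (E F).
    exact: diff_derivable.
  move=> t; rewrite /F /a /shift /=; congr (_ *: (f _ - _)).
  rewrite scalerDl addrA; congr (_ + _ + _); rewrite /GRing.scale /= mulr1 //.
rewrite /derive; set F := (fun t => _); rewrite (E F).
  by rewrite -(deriveE h (df a)).
move=> t; rewrite /F /a /shift /=; congr (_ *: (f _ - _)).
rewrite scalerDl addrA; congr (_ + _ + _); rewrite /GRing.scale /= mulr1 //.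
Qed.

Lemma phi_mvt (f : 'rV[R]_n -> R) (x h : 'rV[R]_n) (C b : R) :
  (forall y, differentiable f y) ->
  exists2 c, c \in `]0, 1[%R &
    (f (h + x) - C + b) - f x = 'd f (c *: h + x) h - C + b * (2 * c).
Proof.
move=> df.
pose G := fun s : R => f (s *: h + x).
pose phi := G + ((-C) \*: (@id R)) + (b \*: ((@id R) * (@id R))).
have HD : forall s : R, is_derive s 1 phi ('d f (s *: h + x) h - C + b * (2 * s)).
  move=> s; apply: (is_derive_eq (is_deriveD (is_deriveD (line_derive f x h s df)
     (is_deriveZ (-C) (@is_derive_id R R s 1))) (is_deriveZ b (is_deriveM (@is_derive_id R R s 1) (@is_derive_id R R s 1))))).
  rewrite /GRing.scale /=. ring.
have Hc : {within `[0, 1], continuous phi}.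
  apply: derivable_within_continuous => s _; exact: (@ex_derive _ _ _ _ _ _ _ (HD s)).
have [c c01 E] := MVT (ltr01) (fun s _ => HD s) Hc.
  exists c => //; move: E; rewrite /phi /G !fctE /= !scale0r !scale1r !add0r subr0 => E; rewrite -[RHS]mulr1 -E.
  rewrite /GRing.scale /=; ring.
Qed.

Lemma descent (f : 'rV[R]_n -> R) (Lip : R) (x y : 'rV[R]_n) :
  (forall y, differentiable f y) ->
  (forall y z : 'rV[R]_n, norm2 (grad f y - grad f z) <= Lip * norm2 (y - z)) ->
  `|f y - f x - dot (grad f x) (y - x)| <= Lip / 2 * dot (y - x) (y - x).
Proof.
move=> df hL.
set h := y - x; set C := dot (grad f x) h; set K := Lip * dot h h.
have bound : forall s, 0 <= s -> `|'d f (s *: h + x) h - C| <= s * K.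
  move=> s s0; rewrite dgrad // /C -dotBl.
  apply: le_trans (CS _ _) _.
  apply: le_trans (ler_wpM2r (norm2_ge0 h) (hL _ _)) _.
  rewrite addrK norm2Z ger0_norm // /K -norm2_sq.
  have -> : Lip * (s * norm2 h) * norm2 h = s * (Lip * norm2 h ^+ 2) by ring.
  by [].
have yE : h + x = y by rewrite /h subrK.
have [c c01 E1] := phi_mvt f x h C (- (K/2)) df.
have [c' c01' E2] := phi_mvt f x h C (K/2) df.
rewrite yE in E1 E2.
have c0 : 0 <= c by move: c01; rewrite in_itv /= => /andP [/ltW].
have c0' : 0 <= c' by move: c01'; rewrite in_itv /= => /andP [/ltW].
have B1 := bound c c0; have B2 := bound c' c0'.
rewrite ler_norml in B1; rewrite ler_norml in B2.
case/andP: B1 => B1a B1b; case/andP: B2 => B2a B2b.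
have -> : Lip / 2 * dot h h = K / 2 by rewrite /K; ring.
set D1 := 'd f (c *: h + x) h in E1 B1a B1b.
set D2 := 'd f (c' *: h + x) h in E2 B2a B2b.
have r1 : -(K/2)*(2*c) = -(c*K) :> R by rewrite mulNr; congr (- _); rewrite mulrA divfK ?pnatr_eq0 // mulrC.
have r2 : (K/2)*(2*c') = c'*K :> R by rewrite mulrA divfK ?pnatr_eq0 // mulrC.
rewrite r1 in E1; rewrite r2 in E2.
exact: (@arith_aux _ _ _ _ _ _ _ _ _ E1 E2 B1b B2a).
Qed.

Lemma dot_pos u : u != 0 -> 0 < dot u u.
Proof.
move=> u0; rewrite lt_def dot_ge0 andbT; apply: contra u0 => /eqP H.
apply/eqP/rowP => i; rewrite mxE.
move: H; rewrite /dot => /eqP; rewrite psumr_eq0; last first.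
  by move=> j _; rewrite -expr2 sqr_ge0.
move/allP => /(_ i (mem_index_enum _)) /=; rewrite mulf_eq0 orbb => /eqP.
done.
Qed.

Lemma ell_le (f : 'rV[R]_n -> R) (Lip : R) (a b : 'rV[R]_n) :
  (forall y, differentiable f y) ->
  (forall y z : 'rV[R]_n, norm2 (grad f y - grad f z) <= Lip * norm2 (y - z)) ->
  a != b -> ell f a b <= Lip.
Proof.
move=> df hL ab; rewrite /ell (negbTE ab) norm2_sq.
have hp : 0 < dot (b - a) (b - a) by apply: dot_pos; rewrite subr_eq0 eq_sym.
rewrite ler_pdivrMr //.
apply: le_trans (ler_wpM2l (ler0n _ 2) (descent f Lip a b df hL)) _.
by rewrite mulrA [2 * _]mulrC divfK ?pnatr_eq0.
Qed.
End S.

Lemma bounded_max (g : nat -> nat) (B : nat) :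
  (forall m, (g m <= B)%N) -> exists T0, forall T, (g T <= g T0)%N.
Proof.
move=> gB.
suff H : forall k T, (B - g T <= k)%N -> exists T0, forall T, (g T <= g T0)%N.
  exact: (H B 0%N (leq_subr _ _)).
elim=> [|k IH] T hT.
  exists T => T'; apply: leq_trans (gB T') _; by rewrite -subn_eq0 -leqn0.
case: (pselect (exists T', (g T < g T')%N)) => [[T' hT']|no].
  apply: (IH T'); have := gB T'; have := gB T; lia.
exists T => T'; rewrite leqNgt; apply/negP => h; apply: no; by exists T'.
Qed.

Lemma aux_nonI (R : realFieldType) (X e rT LT LT1 : R) :
  0 < e -> 0 < rT -> rT <= 1 -> 0 <= X -> X <= LT -> e * LT < LT1 ->
  X * e * rT <= LT1.
Proof.
move=> e0 r0 r1 X0 XL eL.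
have h1 : X * e * rT <= X * e by rewrite ler_piMr // mulr_ge0 // ltW.
have h2 : X * e <= LT * e by rewrite ler_wpM2r // ltW.
apply: le_trans h1 _; apply: le_trans h2 _; rewrite mulrC; exact: ltW.
Qed.

Theorem lemma3 (R : realType) (n : nat) (f : 'rV[R]_n -> R) (Lip : R)
  (A : set 'rV[R]_n) (r : nat -> R) (rr : R) (eta : R)
  (xm1 : 'rV[R]_n) (x : nat -> 'rV[R]_n) (L : nat -> R)
  (v : nat -> 'rV[R]_n) (d : nat -> 'rV[R]_n) (gmax : nat -> \bar R)
  (gamma : nat -> R) (xbar : nat -> 'rV[R]_n) :
  (forall y : 'rV[R]_n, differentiable f y) ->
  (forall y z : 'rV[R]_n,
      norm2 (grad f y - grad f z) <= Lip * norm2 (y - z)) ->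
  compact A ->
  acfw_run f A r xm1 x L v d gmax gamma xbar ->
  condD r rr ->
  1 < eta ->
  0 < L 0%N ->
  finite_set (~` I_eta L eta) /\ infinite_set (I_eta L eta) /\
  (forall k : nat -> nat,
     {homo k : i j / (i < j)%N} ->
     range k = I_eta L eta ->
     forall t : nat,
       (t <= k t)%N /\
       ((k t)%:Z <= t%:Z + Num.floor (ln (Lip / (rr * L 0%N)) / ln eta))%R).
Proof.
move=> df hL _ run D eta1 L0p.
case: run => Axm1 Hx0 HL0 Hstep.
case: D => Hr /andP [rr0 rr1] Hcv.
have eta0 : 0 < eta by apply: lt_trans eta1.
have xne : xm1 != x 0%N.
  apply/negP => /eqP E; move: L0p; by rewrite HL0 /ell E eqxx ltxx.
have Lip0 : 0 < Lip.
  apply: lt_le_trans L0p _; rewrite HL0; exact: ell_le.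
have ellLip : forall a b, ell f a b <= Lip.
  move=> a b; case: (eqVneq a b) => [->|ab]; last exact: ell_le.
  by rewrite /ell eqxx ltW.
have Lstep : forall t, L t.+1 = Num.max (ell f (x t) (xbar t.+1)) (r t * L t).
  by move=> t; case: (Hstep t).
have Lge : forall t, r t * L t <= L t.+1.
  by move=> t; rewrite Lstep le_max lexx orbT.
have rpos : forall t, 0 < r t by move=> t; case/andP: (Hr t).
have rle1 : forall t, r t <= 1 by move=> t; case/andP: (Hr t).
have Lpos : forall t, 0 < L t.
  elim=> [//|t IH]; apply: lt_le_trans (Lge t); exact: mulr_gt0.
have Lle : forall t, L t <= Lip.
  elim=> [|t IH]; first by rewrite HL0.
  rewrite Lstep ge_max ellLip /=.
  apply: le_trans IH; rewrite ler_piMl // ltW //.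
pose Ib := fun s : nat => L s.+1 <= eta * L s.
pose P := fun T : nat => \prod_(s < T) r s.
pose N := fun T : nat => count (predC Ib) (iota 0 T).
have Pge0 : forall T, 0 <= P T.
  by move=> T; rewrite /P; apply: prodr_ge0 => i _; exact: ltW.
have key : forall T, L 0%N * eta ^+ N T * P T <= L T.
  elim=> [|T IH]; first by rewrite /N /P /= big_ord0 expr0 !mulr1.
  rewrite {1}/N; have -> : iota 0 T.+1 = iota 0 T ++ [:: T] by rewrite -addn1 iotaD.
  rewrite count_cat /P big_ord_recr /=.
  rewrite -/(N T) -/(P T).
  case HI: (Ib T) => /=.
    rewrite !addn0 mulrA; apply: le_trans (Lge T); rewrite [r T * _]mulrC.
    by rewrite ler_wpM2r // ltW.
  rewrite addn0 addn1 exprSr.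
  have -> : L 0%N * (eta ^+ N T * eta) * (P T * r T) =
            (L 0%N * eta ^+ N T * P T) * eta * r T by ring.
  apply: (@aux_nonI _ _ _ _ (L T)) => //.
    by rewrite mulr_ge0 // mulr_ge0 // ?exprn_ge0 ?ltW //.
  by rewrite ltNge; apply/negbT.
have Pge : forall T, rr <= P T.
  have Pdec : nonincreasing_seq P.
    apply/nonincreasing_seqP => T; rewrite /P big_ord_recr /= -/(P T).
    by rewrite ler_piMr.
  have Pcv : cvgn P by apply/cvg_ex; exists rr.
  move=> T; have := nonincreasing_cvgn_ge Pdec Pcv T.
  by rewrite (cvg_lim _ Hcv).
set M := Num.floor _.
have NM : forall T, ((N T)%:Z <= M)%R.
  move=> T; rewrite /M floor_ge_int.
  have lne : 0 < ln eta by apply: ln_gt0.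
  have q0 : 0 < rr * L 0%N by rewrite mulr_gt0.
  rewrite ler_pdivlMr // -pmulrn mulr_natl -lnXn //.
  rewrite ler_ln ?posrE ?exprn_gt0 ?divr_gt0 // ler_pdivlMr //.
  apply: le_trans (Lle T); apply: le_trans (key T).
  have -> : eta ^+ N T * (rr * L 0%N) = L 0%N * eta ^+ N T * rr by ring.
  rewrite ler_wpM2l // mulr_ge0 ?exprn_ge0 // ltW //.
have Nnat : forall T, (N T <= `|M|)%N.
  move=> T; rewrite -lez_nat abszE; apply: le_trans (NM T) _; exact: ler_norm.
have [T0 HT0] := bounded_max _ _ Nnat.
have Nmono : forall a b, (a <= b)%N -> (N a <= N b)%N.
  move=> a b ab; rewrite /N -(subnKC ab) iotaD count_cat; exact: leq_addr.
have finC : finite_set (~` I_eta L eta).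
  apply: (sub_finite_set _ (finite_II T0)) => s /= Hs.
  rewrite ltnNge; apply/negP => hs.
  have : (N s.+1 = (N s).+1)%N.
    rewrite /N; have -> : iota 0 s.+1 = iota 0 s ++ [:: s] by rewrite -addn1 iotaD.
    rewrite count_cat /=.
    have -> : ~~ Ib s by apply/negP.
    by rewrite addn1.
  have := HT0 s.+1; have := Nmono _ _ hs; lia.
split; first exact: finC.
split.
  move=> FI; apply: infinite_nat.
  by rewrite -(setUv (I_eta L eta)) finite_setU.
move=> k kinc krange t.
have kge : forall t, (t <= k t)%N.
  elim=> [//|t' IH]; exact: leq_ltn_trans IH (kinc _ _ (ltnSn t')).
have kref : forall i j, (k i < k j)%N -> (i < j)%N.
  move=> i j kij; rewrite ltnNge; apply/negP; rewrite leq_eqVlt => /orP [/eqP ji|ji].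
    by move: kij; rewrite ji ltnn.
  by have := kinc _ _ ji; move: kij; lia.
split; first exact: kge.
have Cle : (count Ib (iota 0 (k t)) <= t)%N.
  rewrite -size_filter.
  apply: (@leq_trans (size [seq k i | i <- iota 0 t])); last by rewrite size_map size_iota.
  apply: uniq_leq_size; first by apply: filter_uniq; exact: iota_uniq.
  move=> s; rewrite mem_filter mem_iota /= add0n => /andP [Hs lt].
  have : I_eta L eta s by [].
  rewrite -krange => -[j _ kj]; apply/mapP; exists j; last by rewrite kj.
  by rewrite mem_iota add0n /=; apply: kref; rewrite kj.
have Nk : (N (k t) + count Ib (iota 0 (k t)) = k t)%N.
  by rewrite addnC /N count_predC size_iota.
rewrite -Nk PoszD addrC; apply: lerD; last exact: NM.
by rewrite lez_nat.
Qed.
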